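(* Let $q>1$ and $0<u<1$. Put weights on the edges $\lambda\to\Lambda$ of Young's lattice ($\Lambda$ obtained from $\lambda$ by adding one box): $m_{\lambda,\Lambda}=\frac{u}{q^{\lambda'_1}(q^{\lambda'_1+1}-1)}$ if the box is added to column $1$, and $m_{\lambda,\Lambda}=\frac{u\,(q^{-\lambda'_s}-q^{-\lambda'_{s-1}})}{q^{\lambda'_1}-1}$ if it is added to column $s>1$. Then for every standard Young tableau $T$, the probability that the Young Tableau Algorithm (run to termination) outputs $T$ equals $$\prod_{r=1}^\infty(1-u/q^r)\prod_{i=0}^{|T|-1}m_{\gamma_i,\gamma_{i+1}},$$ where $\emptyset=\gamma_0\subset\gamma_1\subset\dots\subset\gamma_{|T|}$ is the chain of shapes with $\gamma_k$ the shape formed by the entries $1,\dots,k$ of $T$.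
   Context: $\lambda'_s$ is the length of column $s$ of $\lambda$ ($0$ if empty). Young Tableau Algorithm: coins indexed by $N\ge1$, coin $N$ showing heads with probability $u/q^N$, all flips independent. Start with $\lambda=\emptyset$, $N=1$. Flip coin $N$. If tails, set $N\to N+1$ and flip the new coin. If heads, choose a column $S\ge1$ with $\Pr(S=1)=\frac{q^{N-\lambda'_1}-1}{q^N-1}$ and $\Pr(S=s)=\frac{q^{N-\lambda'_s}-q^{N-\lambda'_{s-1}}}{q^N-1}$ for $s>1$, add a box at the bottom of column $S$, and flip coin $N$ again. Almost surely only finitely many boxes are added; the output is the standard Young tableau obtained by labelling boxes $1,2,\dots$ in order of creation. *)

(* Defs.v *)
From HB Require Import structures.
From mathcomp Require Import all_boot all_order all_algebra.
From mathcomp Require Import all_classical all_reals all_analysis.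
Set Implicit Arguments. Unset Strict Implicit. Unset Printing Implicit Defensive.
Import Order.TTheory GRing.Theory Num.Theory numFieldNormedType.Exports.
Local Open Scope ring_scope.

(* ---------- Shapes ----------
   A shape (Young diagram) is represented by its list of column lengths
   lam' = [lam'_1; lam'_2; ...]  (trailing zeros allowed, irrelevant). *)
Definition shape := seq nat.

(* lam'_s for columns s >= 1 ; 0 for an empty / nonexistent column. *)
Definition colLen (lam : shape) (s : nat) : nat := nth 0%N lam s.-1.

Definition addBox (lam : shape) (s : nat) : shape := incr_nth lam s.-1.

(* ---------- Standard Young tableaux ----------
   A tableau is given as its list of columns, each listed top to bottom. *)
Definition tableau := seq (seq nat).

Definition tab_size (T : tableau) : nat := size (flatten T).

Definition standard (T : tableau) : Prop :=
  [/\ all (fun c => 0 < size c)%N T,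
      sorted geq (map size T),
      perm_eq (flatten T) (iota 1 (tab_size T)),
      all (sorted ltn) T &
      forall s i : nat, (i < size (nth [::] T s.+1))%N ->
        (nth 0 (nth [::] T s) i < nth 0 (nth [::] T s.+1) i)%N ].
                                                     (* rows strictly increase rightward *)

Definition gamma (T : tableau) (k : nat) : shape :=
  map (fun c => count (fun x => x <= k)%N c) T.

Definition col_of (T : tableau) (k : nat) : nat :=
  (find (fun c => k \in c) T).+1.

Section Algo.
Variable R : realType.
Variables q u : R.

(* coin N shows heads with probability u/q^N *)
Definition heads (N : nat) : R := u / q ^+ N.
Definition tails (N : nat) : R := 1 - u / q ^+ N.

(* Pr(S = s) when the current shape is lam and the current coin is N;
   q^(N - l) is written q^N / q^l *)
Definition colprob (lam : shape) (N s : nat) : R :=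
  if s == 1%N then (q ^+ N / q ^+ colLen lam 1 - 1) / (q ^+ N - 1)
  else (q ^+ N / q ^+ colLen lam s - q ^+ N / q ^+ colLen lam s.-1)
         / (q ^+ N - 1).

Definition tailprod (N : nat) : R :=
  limn (fun n : nat => \prod_(N <= r < n) tails r).

Local Open Scope ereal_scope.
(* probFrom cs lam N : probability that, starting from shape lam and about
   to flip coin N, the algorithm adds its subsequent boxes exactly to the
   columns listed in cs (in that order) and afterwards adds no more boxes.
   The next box is created at the first coin index M >= N showing heads
   (coins N, ..., M-1 having shown tails); the process then continues from
   the new shape, flipping coin M again. *)
Fixpoint probFrom (cs : seq nat) (lam : shape) (N : nat) : \bar R :=
  match cs with
  | [::] => (tailprod N)%:E
  | s :: cs' =>
      \sum_(N <= M <oo)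
        ((\prod_(N <= j < M) tails j) * heads M * colprob lam M s)%:E
          * probFrom cs' (addBox lam s) M
  end.
Local Close Scope ereal_scope.

(* Probability that the Young Tableau Algorithm (started with the empty shape
   and N = 1) outputs the tableau T: the k-th created box (k = 1..|T|) is
   added to the column of T containing k, and no further box is ever added. *)
Definition probOutput (T : tableau) : \bar R :=
  probFrom [seq col_of T k | k <- iota 1 (tab_size T)] [::] 1.

Definition mweight (lam : shape) (s : nat) : R :=
  if s == 1%N then
    u / (q ^+ colLen lam 1 * (q ^+ (colLen lam 1).+1 - 1))
  else u * ((q ^- colLen lam s) - (q ^- colLen lam s.-1))
         / (q ^+ colLen lam 1 - 1).

Definition diffcol (lam Lam : shape) : nat :=
  (find (fun j => nth 0%N lam j != nth 0%N Lam j)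
        (iota 0 (maxn (size lam) (size Lam)))).+1.

Definition medge (lam Lam : shape) : R := mweight lam (diffcol lam Lam).

End Algo.

(* Main.v *)
Require Import Defs.
From HB Require Import structures.
From mathcomp Require Import all_boot all_order all_algebra.
From mathcomp Require Import all_classical all_reals all_analysis.
From mathcomp Require Import ring lra zify.
Import Order.TTheory GRing.Theory Num.Theory numFieldNormedType.Exports.
Local Open Scope classical_set_scope.
Local Open Scope ring_scope.

Section Tab.
Variable T : tableau.
Hypothesis hT : standard T.

Local Notation col j := (nth [::] T j).
Local Notation n := (tab_size T).

Lemma sorted_le (s : seq nat) : sorted ltn s -> sorted leq s.
Proof. by apply: sub_sorted => a b /ltnW. Qed.

Lemma col_sorted j : sorted ltn (col j).
Proof.
case: hT => _ _ _ hs _; case: (ltnP j (size T)) => hj.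
  by move/allP: hs; apply; rewrite mem_nth.
by rewrite nth_default.
Qed.

Lemma col_uniq j : uniq (col j).
Proof. by apply: (sorted_uniq ltn_trans ltnn); apply: col_sorted. Qed.

Lemma col_size j : (size (col j.+1) <= size (col j))%N.
Proof.
case: hT => _ hsz _ _ _; case: (ltnP j.+1 (size T)) => hj; last by rewrite nth_default.
have gt : transitive geq by move=> a b c /= h1 h2; exact: leq_trans h2 h1.
have := @sorted_leq_nth nat geq gt (fun a => leqnn a) 0%N (map size T) hsz j j.+1.
rewrite !inE size_map (ltnW hj) hj => /(_ isT isT (leqnSn j)).
by rewrite /= !(nth_map [::]) // ltnW.
Qed.

Lemma row_lt j i : (i < size (col j.+1))%N -> (nth 0 (col j) i < nth 0 (col j.+1) i)%N.
Proof. by case: hT => _ _ _ _ hr; apply: hr. Qed.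

Lemma mem_flat x : (x \in flatten T) = (0 < x <= n)%N.
Proof. by case: hT => _ _ hp _ _; rewrite (perm_mem hp) mem_iota add1n ltnS. Qed.

Lemma uniq_flat : uniq (flatten T).
Proof. by case: hT => _ _ hp _ _; rewrite (perm_uniq hp) iota_uniq. Qed.

Lemma col_pos j y : y \in col j -> (0 < y)%N.
Proof.
move=> hy; case: (ltnP j (size T)) => hj; last by rewrite nth_default in hy.
have : y \in flatten T by apply/flattenP; exists (col j) => //; rewrite mem_nth.
by rewrite mem_flat => /andP[].
Qed.

Definition jx x := find (fun c => x \in c) T.

Lemma jx_mem x : (0 < x <= n)%N -> ((jx x < size T)%N /\ x \in col (jx x)).
Proof.
rewrite -mem_flat => /flattenP[c cT xc].
have hh : has (fun c => x \in c) T by apply/hasP; exists c.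
split; first by rewrite /jx -has_find.
exact: (nth_find [::] hh).
Qed.

Lemma jx_uniq x j : x \in col j -> j = jx x.
Proof.
move=> xj; have hj : (j < size T)%N.
  by case: (ltnP j (size T)) => // h; rewrite nth_default in xj.
have xfl : (0 < x <= n)%N by rewrite -mem_flat; apply/flattenP; exists (col j) => //; rewrite mem_nth.
have [jxs xjx] := jx_mem _ xfl.
case: (ltngtP j (jx x)) => // h.
  by have := before_find [::] h; rewrite xj.
have := uniq_flat; rewrite -(cat_take_drop j T) flatten_cat cat_uniq => /and3P[_ hn _].
case/negP: hn; apply/hasP; exists x.
  by rewrite (drop_nth [::] hj) /= mem_cat xj.
apply/flattenP; exists (col (jx x)) => //.
rewrite -(nth_take [::] h); apply: mem_nth; rewrite size_take hj //.
Qed.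

Lemma count_pred1_col x j : (0 < x <= n)%N -> count (pred1 x) (col j) = (j == jx x).
Proof.
move=> hx; rewrite count_uniq_mem ?col_uniq //.
have [_ xm] := jx_mem _ hx.
case: eqP => [->|ne]; first by rewrite xm.
case: (boolP (x \in col j)) => // xj; case: ne; exact: jx_uniq.
Qed.

Lemma nth_gamma k j : nth 0 (gamma T k) j = count (fun y => y <= k)%N (col j).
Proof.
case: (ltnP j (size T)) => hj; first by rewrite (nth_map [::]).
by rewrite !nth_default ?size_map.
Qed.

Lemma count_leS (c : seq nat) k :
  count (fun y => y <= k.+1)%N c = (count (fun y => y <= k)%N c + count (pred1 k.+1) c)%N.
Proof.
elim: c => //= y c ->.
have [->|ne] := eqVneq y k.+1; first by rewrite leqnn ltnn /=; lia.
by rewrite leq_eqVlt (negPf ne) /= ltnS; lia.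
Qed.

Lemma size_gamma k : size (gamma T k) = size T.
Proof. by rewrite size_map. Qed.

Lemma gammaS k : (k < n)%N -> gamma T k.+1 = addBox (gamma T k) (col_of T k.+1).
Proof.
move=> kn; have hx : (0 < k.+1 <= n)%N by [].
have [hjs _] := jx_mem _ hx.
rewrite /addBox /col_of -/(jx k.+1) /=.
apply: (@eq_from_nth _ 0%N); first by rewrite size_incr_nth !size_gamma hjs.
move=> j _; rewrite nth_incr_nth !nth_gamma count_leS count_pred1_col // eq_sym.
by rewrite addnC.
Qed.

Lemma diffcol_incr (v : seq nat) i : (i < size v)%N -> diffcol v (incr_nth v i) = i.+1.
Proof.
move=> hi; rewrite /diffcol size_incr_nth hi maxnn; congr S.
rewrite (@eq_find _ _ (pred1 i)); last first.
  move=> j /=; rewrite nth_incr_nth [j == i]eq_sym; case: (i == j).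
    by rewrite add1n neq_ltn ltnSn.
  by rewrite add0n eqxx.
rewrite -/(index i (iota 0 (size v))).
have E : i = nth 0%N (iota 0 (size v)) i by rewrite nth_iota.
by rewrite {1}E index_uniq ?size_iota ?iota_uniq.
Qed.

Lemma sorted_mono (s : seq nat) a b : sorted ltn s -> (a <= b)%N -> (b < size s)%N ->
  (nth 0 s a <= nth 0 s b)%N.
Proof.
move=> hs ab bs; have := sorted_leq_nth leq_trans leqnn 0%N (sorted_le _ hs).
move=> /(_ a b); rewrite !inE bs (leq_ltn_trans ab bs); apply => //.
Qed.

Lemma count_lb (s : seq nat) i k : sorted ltn s -> (i < size s)%N -> (nth 0 s i <= k)%N ->
  (i.+1 <= count (fun y => y <= k)%N s)%N.
Proof.
move=> hs hi hk.
rewrite -(cat_take_drop i.+1 s) count_cat.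
have : all (fun y => y <= k)%N (take i.+1 s).
  apply/allP => y /(nthP 0) [t ht <-].
  rewrite size_takel // in ht.
  rewrite nth_take //; apply: leq_trans hk.
  by apply: sorted_mono => //; rewrite -ltnS.
rewrite all_count => /eqP ->; rewrite size_takel //.
exact: leq_addr.
Qed.

Lemma count_ub (s : seq nat) x k : sorted ltn s -> x \in s -> (k < x)%N ->
  (count (fun y => y <= k)%N s <= index x s)%N.
Proof.
move=> hs xs kx; set i := index x s.
rewrite -(cat_take_drop i s) count_cat.
have h0 : count (fun y => y <= k)%N (drop i s) = 0%N.
  apply/eqP; rewrite -leqn0 leqNgt -has_count; apply/hasPn => y /(nthP 0) [t ht <-].
  rewrite nth_drop -ltnNge; apply: leq_trans kx _.
  rewrite size_drop in ht.
  rewrite -{1}(nth_index 0 xs).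
  apply: sorted_mono => //; first exact: leq_addr.
  by rewrite -ltn_subRL.
rewrite h0 addn0; apply: leq_trans (count_size _ _) _.
by rewrite size_take; case: ifP => // /negbT; rewrite -leqNgt.
Qed.

Lemma count_down k j : (0 < count (fun y => y <= k)%N (col j))%N ->
  (0 < count (fun y => y <= k)%N (col 0))%N.
Proof.
elim: j => // j IH h; apply: IH.
move: h; rewrite -has_count => /hasP [y hy yk].
have hsz : (0 < size (col j.+1))%N by case: (col j.+1) hy.
have h0 : (nth 0 (col j.+1) 0 <= y)%N.
  have [t ht <-] := nthP 0 hy.
  by apply: sorted_mono => //; apply: col_sorted.
apply: (@count_lb _ 0%N) => //; first exact: col_sorted.
  by apply: leq_trans hsz (col_size j).
by apply: leq_trans (ltnW (row_lt _ _ hsz)) _; apply: leq_trans h0 yk.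
Qed.

Lemma valid_step k : (k < n)%N ->
  (col_of T k.+1 == 1)%N || ((0 < colLen (gamma T k) 1) &&
     (colLen (gamma T k) (col_of T k.+1) <= colLen (gamma T k) (col_of T k.+1).-1))%N.
Proof.
move=> kn.
have hx : (0 < k.+1 <= n)%N by [].
have [hjs xm] := jx_mem _ hx.
rewrite /col_of -/(jx k.+1).
case E : (jx k.+1) xm hjs => [//|j] xm hjs /=.
rewrite /colLen /= !nth_gamma.
set i := index k.+1 (col j.+1).
have hi : (i < size (col j.+1))%N by rewrite index_mem.
have ub : (count (fun y => y <= k)%N (col j.+1) <= i)%N.
  by apply: count_ub => //; apply: col_sorted.
have lb : (i.+1 <= count (fun y => y <= k)%N (col j))%N.
  apply: count_lb; first exact: col_sorted.
    by apply: leq_trans hi (col_size j).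
  by rewrite -ltnS; have := row_lt _ _ hi; rewrite nth_index.
apply/andP; split.
  by apply: (@count_down k j); apply: leq_trans lb.
by apply: leq_trans ub _; apply: leq_trans (leqnSn i) lb.
Qed.

Lemma gamma0_nth j : nth 0 (gamma T 0) j = 0%N.
Proof.
rewrite nth_gamma; apply/eqP; rewrite -leqn0 leqNgt -has_count.
apply/hasPn => y hy /=; rewrite -ltnNge; exact: col_pos hy.
Qed.

End Tab.

Section Real.
Variables (R : realType) (q u : R).
Hypothesis q1 : 1 < q.
Hypothesis u0 : 0 < u.
Hypothesis u1 : u < 1.

Definition TT (N M : nat) : R := \prod_(N <= j < M) tails q u j.
Definition phi (b M : nat) : R := \prod_(j < b) (1 - q ^+ j / q ^+ M).
Definition dphi (b M : nat) : R := phi b M - phi b M.-1.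
Definition hh (lam : Defs.shape) (M s : nat) : R := heads q u M * colprob q lam M s.

Lemma q0 : 0 < q. Proof. by apply: lt_trans q1. Qed.
Lemma qX0 n : 0 < q ^+ n. Proof. exact: exprn_gt0 q0. Qed.
Lemma qXn0 n : q ^+ n != 0. Proof. by rewrite gt_eqF // qX0. Qed.
Lemma qX1 n : 1 <= q ^+ n. Proof. by apply: exprn_ege1; apply: ltW. Qed.
Lemma qXgt1 n : (0 < n)%N -> 1 < q ^+ n.
Proof. by move=> n0; rewrite exprn_egt1 // -lt0n. Qed.
Lemma qXle m n : (q ^+ m <= q ^+ n) = (m <= n)%N.
Proof. exact: ler_eXn2l. Qed.

Lemma tails_gt0 j : 0 < tails q u j.
Proof.
rewrite /tails subr_gt0 ltr_pdivrMr ?qX0 // mul1r.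
by apply: lt_le_trans u1 (qX1 j).
Qed.
Lemma tails_le1 j : tails q u j <= 1.
Proof. by rewrite /tails lerBlDr lerDl divr_ge0 // ?ltW ?qX0. Qed.

Lemma TT_ge0 N M : 0 <= TT N M.
Proof. by apply: prodr_ge0 => i _; apply: ltW; apply: tails_gt0. Qed.

Lemma TT_split N M P : (N <= M)%N -> (M <= P)%N -> TT N M * TT M P = TT N P.
Proof. by move=> h1 h2; rewrite /TT -big_cat_nat. Qed.

Lemma tailseq_noninc M :
  {homo (fun n => \prod_(M <= r < n) tails q u r) : n m / (n <= m)%N >-> (m <= n)%R}.
Proof.
move=> n m nm /=.
have H01 : forall a b, \prod_(a <= r < b) tails q u r <= 1.
  by move=> a b; apply: prodr_ile1 => i _; rewrite tails_le1 ltW ?tails_gt0.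
case: (leqP n M) => nM.
  by rewrite [X in _ <= X]big_geq //; apply: H01.
rewrite (@big_cat_nat _ _ _ n M m) //=; last exact: ltnW.
rewrite -[X in _ <= X]mulr1 ler_pM2l ?H01 //.
by apply: prodr_gt0 => i _; apply: tails_gt0.
Qed.

Lemma tailseq_cvg M : cvgn (fun n => \prod_(M <= r < n) tails q u r).
Proof.
apply: nonincreasing_is_cvgn; first exact: tailseq_noninc.
exists 0 => _ [n _ <-]; apply: prodr_ge0 => i _; apply: ltW; apply: tails_gt0.
Qed.

Lemma tailprod_ge0 N : 0 <= tailprod q u N.
Proof.
apply: limr_ge; first exact: tailseq_cvg.
by apply: nearW => n; apply: prodr_ge0 => i _; apply: ltW; apply: tails_gt0.
Qed.

Lemma TT_tailprod N M : (N <= M)%N -> TT N M * tailprod q u M = tailprod q u N.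
Proof.
move=> NM.
suff H : (fun n => \prod_(N <= r < n) tails q u r) @ \oo --> TT N M * tailprod q u M.
  by rewrite /tailprod (cvg_lim _ H).
have X := cvgM (cvg_cst (TT N M)) (tailseq_cvg M).
apply: (@cvg_trans _ ((fun n => TT N M * \prod_(M <= r < n) tails q u r) @ \oo)); last exact: X.
apply: near_eq_cvg; near=> n => /=.
rewrite /TT -big_cat_nat //.
near: n; exists M => //.
Unshelve. all: by end_near. Qed.

Lemma phi_ge0 b M : 0 <= phi b M.
Proof.
case: (leqP b M) => bM.
  apply: prodr_ge0 => i _; rewrite subr_ge0 ler_pdivrMr ?qX0 // mul1r qXle.
  by apply: leq_trans (ltnW (ltn_ord i)) bM.
rewrite /phi (bigD1 (Ordinal bM)) //= divff ?qXn0 // subrr mul0r //.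
Qed.

Lemma phi_eq0 b M : (M < b)%N -> phi b M = 0.
Proof. by move=> bM; rewrite /phi (bigD1 (Ordinal bM)) //= divff ?qXn0 // subrr mul0r. Qed.

Lemma phiS b M : phi b.+1 M = phi b M * (1 - q ^+ b / q ^+ M).
Proof. by rewrite /phi big_ord_recr. Qed.

Lemma dphiE b M : (0 < M)%N -> dphi b M = phi b M * (q ^+ b - 1) / (q ^+ M - 1).
Proof.
case: M => // M _; rewrite /dphi /=.
case: b => [|c]; first by rewrite /phi !big_ord0 !subrr mulr0 mul0r.
have E : phi c.+1 M.+1 = (1 - q ^+ 0 / q ^+ M.+1) * phi c M.
  rewrite {1}/phi big_ord_recl; congr (_ * _).
  by apply: eq_bigr => i _; rewrite lift0 !exprS; congr (1 - _); field; rewrite qXn0 gt_eqF ?q0.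
rewrite E phiS.
rewrite !exprS /=.
have hM : q * q ^+ M - 1 != 0.
  by rewrite subr_eq0 gt_eqF // -exprS qXgt1.
field; rewrite hM qXn0 gt_eqF ?q0 //.
Qed.

Lemma dphi_ge0 b M : 0 <= dphi b M.
Proof.
case: M => [|M]; first by rewrite /dphi subrr.
rewrite dphiE // divr_ge0 // ?mulr_ge0 ?phi_ge0 // subr_ge0 qX1 //.
Qed.

Lemma dphi_eq0 b M : (M < b)%N -> dphi b M = 0.
Proof.
case: M => [|M]; first by rewrite /dphi subrr.
by move=> h; rewrite dphiE // phi_eq0 // !mul0r.
Qed.

Lemma sum_dphi b n : (0 < b)%N -> \sum_(1 <= M < n.+1) dphi b M = phi b n.
Proof.
move=> b0; rewrite big_add1 /=.
rewrite (eq_bigr (fun k => phi b k.+1 - phi b k)) //.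
by rewrite telescope_sumr // (@phi_eq0 b 0 b0) subr0.
Qed.

Lemma phi_cvg b : phi b n @[n --> \oo] --> (1:R).
Proof.
elim: b => [|b IH].
  by rewrite /phi; under eq_fun do rewrite big_ord0; apply: cvg_cst.
have E : phi b.+1 = (fun n => phi b n * (1 - q ^+ b / q ^+ n)).
  by apply/funext => n; rewrite phiS.
rewrite E.
have G : (fun n => q ^+ b / q ^+ n) @ \oo --> (0:R).
  have -> : (fun n => q ^+ b / q ^+ n) = geometric (q ^+ b) q^-1.
    by apply/funext => n; rewrite /geometric /= exprVn.
  apply: cvg_geometric.
  rewrite ger0_norm ?invr_ge0 ?ltW ?q0 // invf_lt1 ?q0 //.
have G2 : (fun n => 1 - q ^+ b / q ^+ n) @ \oo --> (1:R).
  have G1 : (fun n : nat => (1:R)) @ \oo --> (1:R) by apply: cvg_cst.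
  have := cvgB G1 G; rewrite subr0; apply.
have := cvgM IH G2; rewrite mulr1; apply.
Qed.

Lemma hh_ge0 lam M s : (colLen lam 1 <= M)%N ->
  (s == 1)%N || (colLen lam s <= colLen lam s.-1)%N -> 0 <= hh lam M s.
Proof.
move=> aM hs; rewrite /hh /heads /colprob.
apply: mulr_ge0; first by rewrite divr_ge0 ?ltW ?qX0.
case: eqP => [_|/eqP s1].
  apply: divr_ge0; last by rewrite subr_ge0 qX1.
  by rewrite subr_ge0 ler_pdivlMr ?qX0 // mul1r qXle.
apply: divr_ge0; last by rewrite subr_ge0 qX1.
move: hs; rewrite (negPf s1) /= => hs.
rewrite subr_ge0 ler_pM2l ?qX0 // lef_pV2 ?posrE ?qX0 // qXle //.
Qed.

Lemma hh_eq0 lam : hh lam (colLen lam 1) 1 = 0.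
Proof. by rewrite /hh /colprob /= divff ?qXn0 // subrr mul0r mulr0. Qed.

Lemma colLen_addBox lam s t : (0 < s)%N -> (0 < t)%N ->
  colLen (addBox lam s) t = (colLen lam t + (s == t))%N.
Proof.
case: s => // s _; case: t => // t _.
by rewrite /colLen /addBox nth_incr_nth /= eqSS addnC.
Qed.

Lemma pointwise lam s M : (0 < M)%N -> (0 < s)%N ->
  (s == 1)%N || (0 < colLen lam 1)%N ->
  phi (colLen lam 1) M * hh lam M s =
  mweight q u lam s * dphi (colLen (addBox lam s) 1) M.
Proof.
move=> M0 s0 hs; rewrite colLen_addBox // dphiE //.
have hM : q ^+ M - 1 != 0 by rewrite subr_eq0 gt_eqF // qXgt1.
rewrite /hh /heads /colprob /mweight.
have [s1|s1] := eqVneq s 1%N.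
  subst s; rewrite /= addn1 phiS exprS.
  have ha : q * q ^+ colLen lam 1 - 1 != 0.
    by rewrite subr_eq0 gt_eqF // -exprS qXgt1.
  field; rewrite hM ha !qXn0 //.
move: hs; rewrite (negPf s1) /= => a0; rewrite addn0.
have ha : q ^+ colLen lam 1 - 1 != 0 by rewrite subr_eq0 gt_eqF // qXgt1.
field; rewrite hM ha !qXn0 //.
Qed.


Fixpoint valid (lam : Defs.shape) (cs : seq nat) : bool :=
  if cs is s :: cs' then
    [&& (0 < s)%N,
        (s == 1)%N || ((0 < colLen lam 1) && (colLen lam s <= colLen lam s.-1))%N
      & valid (addBox lam s) cs']
  else true.

Fixpoint mprod (lam : Defs.shape) (cs : seq nat) : R :=
  if cs is s :: cs' then mweight q u lam s * mprod (addBox lam s) cs' else 1.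

Local Open Scope ereal_scope.

Lemma probFrom_cons s cs lam N :
  probFrom q u (s :: cs) lam N =
  \sum_(N <= M <oo) (TT N M * hh lam M s)%:E * probFrom q u cs (addBox lam s) M.
Proof.
by apply: congr_lim; apply/funext => n; apply: eq_bigr => M _; rewrite /TT /hh mulrA.
Qed.

Lemma inner_ge0 s cs lam M
  (IH : forall lam N, valid lam cs -> (colLen lam 1 <= N)%N -> 0 <= probFrom q u cs lam N) :
  valid lam (s :: cs) -> (colLen lam 1 <= M)%N ->
  0 <= (hh lam M s)%:E * probFrom q u cs (addBox lam s) M.
Proof.
move=> /and3P[s0 hs hv] aM.
have [s1|s1] := eqVneq s 1%N.
  subst s; have [e|ne] := eqVneq M (colLen lam 1).
    by rewrite e hh_eq0 mul0e.
  apply: mule_ge0; first by rewrite lee_fin hh_ge0 // eqxx.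
  apply: IH => //; rewrite colLen_addBox // eqxx addn1.
  by rewrite ltn_neqAle eq_sym ne aM.
move: hs; rewrite ?(negPf s1) /= => /andP[a0 hs].
apply: mule_ge0; first by rewrite lee_fin hh_ge0 // hs orbT.
by apply: IH => //; rewrite colLen_addBox // (negPf s1) addn0.
Qed.

Lemma probFrom_ge0 cs lam N : valid lam cs -> (colLen lam 1 <= N)%N ->
  0 <= probFrom q u cs lam N.
Proof.
elim: cs lam N => [|s cs IH] lam N hv hN.
  by rewrite /= lee_fin tailprod_ge0.
rewrite probFrom_cons; apply: nneseries_ge0 => M NM _.
rewrite EFinM -muleA; apply: mule_ge0; first by rewrite lee_fin TT_ge0.
by apply: inner_ge0 => //; apply: leq_trans hN NM.
Qed.

Lemma term_ge0 cs lam M : valid lam cs ->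
  0 <= (dphi (colLen lam 1) M * TT 1 M)%:E * probFrom q u cs lam M.
Proof.
move=> hv; case: (ltnP M (colLen lam 1)) => hM.
  by rewrite dphi_eq0 // mul0r mul0e.
by apply: mule_ge0; [rewrite lee_fin mulr_ge0 ?dphi_ge0 ?TT_ge0 | apply: probFrom_ge0].
Qed.

Lemma eq_eseries_from (f g : nat -> \bar R) N :
  (forall i, (N <= i)%N -> f i = g i) ->
  \sum_(N <= i <oo) f i = \sum_(N <= i <oo) g i.
Proof.
move=> h; apply: congr_lim; apply/funext => n; apply: eq_big_nat => i /andP[hi _].
exact: h.
Qed.

Lemma step2 lam s cs :
  valid lam (s :: cs) ->
  ((0 < colLen (addBox lam s) 1)%N ->
   \sum_(1 <= M <oo) (dphi (colLen (addBox lam s) 1) M * TT 1 M)%:E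
        * probFrom q u cs (addBox lam s) M
   = (tailprod q u 1 * mprod (addBox lam s) cs)%:E) ->
  \sum_(1 <= M <oo) (phi (colLen lam 1) M * (TT 1 M * hh lam M s))%:E
        * probFrom q u cs (addBox lam s) M
  = (tailprod q u 1 * mprod lam (s :: cs))%:E.
Proof.
move=> hv0; have /and3P[s0 hs hv] := hv0; move=> IH.
have hs' : (s == 1)%N || (0 < colLen lam 1)%N.
  by case/orP: hs => [->//|/andP[-> _]]; rewrite orbT.
have a0 : (0 < colLen (addBox lam s) 1)%N.
  rewrite colLen_addBox //; case/orP: hs' => [/eqP->|h].
    by rewrite eqxx addn1.
  by rewrite (leq_trans h) // leq_addr.
rewrite (@eq_eseries_from _ (fun M => (mweight q u lam s)%:E *
   ((dphi (colLen (addBox lam s) 1) M * TT 1 M)%:E * probFrom q u cs (addBox lam s) M)) 1); last first.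
  move=> M hM; rewrite muleA -EFinM; congr (_%:E * _).
  by rewrite mulrCA pointwise //; ring.
rewrite nneseriesZl; last by move=> i _; apply: term_ge0.
by rewrite IH // -EFinM /=; congr _%:E; ring.
Qed.


Lemma series_from (f : nat -> \bar R) N :
  \sum_(N <= i <oo) f i = \sum_(0 <= i <oo) (if (N <= i)%N then f i else 0).
Proof. by rewrite ereal_series eseries_mkcond. Qed.

Lemma series_fin (f : nat -> \bar R) n :
  (forall i, (n <= i)%N -> f i = 0) ->
  \sum_(0 <= i <oo) f i = \sum_(0 <= i < n) f i.
Proof.
move=> h.
have H : (fun k => \sum_(0 <= i < k) f i) @ \oo --> \sum_(0 <= i < n) f i.
  apply: cvg_near_cst; near=> k.
  rewrite (@big_cat_nat _ _ _ n) //=; last by near: k; exists n.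
  by rewrite [X in _ + X]big1_seq ?adde0 // => i /andP[_]; rewrite mem_index_iota => /andP[+ _]; apply: h.
exact: (cvg_lim (@ereal_hausdorff R) H).
Unshelve. all: by end_near. Qed.

Lemma lemA cs : forall lam, valid lam cs -> (0 < colLen lam 1)%N ->
  \sum_(1 <= M <oo) (dphi (colLen lam 1) M * TT 1 M)%:E * probFrom q u cs lam M
  = (tailprod q u 1 * mprod lam cs)%:E.
Proof.
elim: cs => [|s cs IH] lam hv a0.
  rewrite /= (@eq_eseries_from _ (fun M => (dphi (colLen lam 1) M * tailprod q u 1)%:E) 1);
    last by move=> M hM; rewrite -EFinM -mulrA TT_tailprod.
  set tp := tailprod q u 1.
  have H : (fun n => \sum_(1 <= M < n) (dphi (colLen lam 1) M * tp)%:E) @ \oo --> (tp * 1)%:E.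
    rewrite -cvg_shiftS /=.
    have E : (fun n => \sum_(1 <= M < n.+1) (dphi (colLen lam 1) M * tp)%:E)
           = (fun n => (phi (colLen lam 1) n * tp)%:E).
      by apply/funext => n; rewrite sumEFin -big_distrl /= sum_dphi.
    rewrite E; apply: cvg_EFin; first by apply: nearW.
    rewrite mulrC; exact: (cvgM (phi_cvg _) (cvg_cst tp)).
  exact: (cvg_lim (@ereal_hausdorff R) H).
have hv0 := hv; move/and3P: hv => [s0 hs hv].
set a := colLen lam 1.
set lam' := addBox lam s.
set P := probFrom q u cs lam'.
have inner M : (a <= M)%N -> 0 <= (hh lam M s)%:E * P M.
  by move=> aM; apply: inner_ge0 => // lam2 N hv2 hN; apply: probFrom_ge0.
pose F M M' := (dphi a M * (TT 1 M' * hh lam M' s))%:E * P M'.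
have F_ge0 M M' : (M <= M')%N -> 0 <= F M M'.
  move=> MM'; rewrite /F; case: (ltnP M a) => hMa.
    by rewrite dphi_eq0 // mul0r mul0e.
  rewrite mulrA EFinM -muleA; apply: mule_ge0.
    by rewrite lee_fin mulr_ge0 ?dphi_ge0 ?TT_ge0.
  by apply: inner; apply: leq_trans hMa MM'.
pose G M M' := if (1 <= M)%N && (M <= M')%N then F M M' else 0.
have G_ge0 M M' : 0 <= G M M'.
  by rewrite /G; case: ifP => // /andP[_ h]; apply: F_ge0.
transitivity (\sum_(1 <= M <oo) \sum_(M <= M' <oo) F M M').
  apply: eq_eseries_from => M hM; rewrite probFrom_cons -/lam' -/P.
  case: (ltnP M a) => hMa.
    rewrite dphi_eq0 // mul0r mul0e; apply/esym/eseries0 => i _ _.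
    by rewrite /F dphi_eq0 // mul0r mul0e.
  rewrite ereal_series [in RHS]ereal_series -nneseriesZl; last first.
    move=> i hi; rewrite EFinM -muleA; apply: mule_ge0; first by rewrite lee_fin TT_ge0.
    by apply: inner; apply: leq_trans hMa hi.
  apply: eq_eseriesr => i hi; rewrite muleA -EFinM /F; congr (_%:E * _).
  by rewrite -(@TT_split 1 M i) //; ring.
transitivity (\sum_(0 <= M <oo) \sum_(0 <= M' <oo) G M M').
  rewrite series_from; apply: eq_eseries_from => M _; rewrite /G.
  case: ifP => h1.
    by rewrite series_from; apply: eq_eseries_from => M' _ /=.
  by apply/esym/eseries0 => i _ _ /=.
rewrite nneseries_interchange //.
transitivity (\sum_(1 <= M' <oo) (phi a M' * (TT 1 M' * hh lam M' s))%:E * P M'); last first.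
  apply: step2 => // a'0; apply: IH => //.
rewrite [RHS]series_from; apply: eq_eseries_from => M' _.
rewrite (@series_fin _ M'.+1); last first.
  by move=> i hi; rewrite /G (leqNgt i M') hi andbF.
case: ifP => h1'; last first.
  rewrite big1_seq // => i _; rewrite /G; case: ifP => // /andP[x y].
  by rewrite (leq_trans x y) in h1'.
rewrite big_nat_recl //= {1}/G /= add0e.
rewrite (@eq_big_nat _ _ _ 0 M' _ (fun i => (dphi a i.+1)%:E * ((TT 1 M' * hh lam M' s)%:E * P M'))); last first.
  move=> i /andP[_ hi]; rewrite /G /= hi /F EFinM muleA //.
rewrite -ge0_sume_distrl; last by move=> i _; rewrite lee_fin dphi_ge0.
rewrite sumEFin muleA -EFinM.
rewrite -sum_dphi // big_add1 /=; done.
Qed.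


Lemma probFrom_ext cs : forall (l1 l2 : Defs.shape) N,
  (forall i, nth 0%N l1 i = nth 0%N l2 i) ->
  probFrom q u cs l1 N = probFrom q u cs l2 N.
Proof.
elim: cs => [//|s cs IH] l1 l2 N h /=.
apply: congr_lim; apply/funext => k; apply: eq_bigr => M _.
have -> : colprob q l1 M s = colprob q l2 M s by rewrite /colprob /colLen !h.
by rewrite (IH _ (addBox l2 s)) // => i; rewrite /addBox !nth_incr_nth h.
Qed.

Local Close Scope ereal_scope.

Lemma valid_chain T (hT : standard T) k : (k <= tab_size T)%N ->
  valid (gamma T k) [seq col_of T j | j <- iota k.+1 (tab_size T - k)].
Proof.
move=> kn; move e: (tab_size T - k)%N => m.
elim: m k kn e => [//|m IH] k kn e /=.
have kn' : (k < tab_size T)%N by lia.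
apply/andP; split; first exact: valid_step.
rewrite -gammaS //; apply: IH => //; lia.
Qed.

Lemma mprod_chain T (hT : standard T) k : (k <= tab_size T)%N ->
  mprod (gamma T k) [seq col_of T j | j <- iota k.+1 (tab_size T - k)] =
  \prod_(k <= i < tab_size T) medge q u (gamma T i) (gamma T i.+1).
Proof.
move=> kn; move e: (tab_size T - k)%N => m.
elim: m k kn e => [|m IH] k kn e /=.
  by rewrite big_geq //; lia.
have kn' : (k < tab_size T)%N by lia.
rewrite big_ltn // -IH //; last by lia.
rewrite -gammaS //; congr (_ * _).
rewrite /medge gammaS // /addBox /col_of diffcol_incr //.
rewrite size_gamma; have hx : (0 < k.+1 <= tab_size T)%N by [].
by have [] := jx_mem T hT _ hx.
Qed.

End Real.

Theorem corollary4 (R : realType) (q u : R) (T : tableau) :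
  1 < q -> 0 < u < 1 -> standard T ->
  probOutput q u T =
  (tailprod q u 1 *
   \prod_(i < tab_size T) medge q u (gamma T i) (gamma T i.+1))%:E.
Proof.
move=> q1 /andP[u0 u1] hT.
rewrite /probOutput (@probFrom_ext R q u _ [::] (gamma T 0)); last first.
  by move=> i; rewrite nth_nil gamma0_nth.
have E : [seq col_of T k | k <- iota 1 (tab_size T)] =
         [seq col_of T j | j <- iota 0.+1 (tab_size T - 0)] by rewrite subn0.
have MC := mprod_chain R q u q1 u0 u1 T hT 0 (leq0n (tab_size T)).
rewrite big_mkord in MC.
rewrite E -MC.
have hv := valid_chain R q u q1 u0 u1 T hT 0 (leq0n (tab_size T)).
move: hv; rewrite subn0; case: (tab_size T) => [|m] hv.
  by rewrite /= mulr1.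
rewrite probFrom_cons.
have a0 : colLen (gamma T 0) 1 = 0%N by rewrite /colLen gamma0_nth.
rewrite (@eq_eseries_from R _ (fun M => ((phi R q (colLen (gamma T 0) 1) M *
   (TT R q u 1 M * hh R q u (gamma T 0) M (col_of T 1)))%:E *
   probFrom q u [seq col_of T j | j <- iota 2 m] (addBox (gamma T 0) (col_of T 1)) M)%E) 1); last first.
  by move=> M _; rewrite a0 /phi big_ord0 mul1r.
rewrite (step2 R q u q1 u0 u1) //.
move=> ha; apply: (lemA R q u q1 u0 u1) => //.
by move: hv => /and3P[].
Qed.
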